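(* Let $\nu:S\setminus\{0\}\to C$ and $\nu':S\setminus\{0\}\to C'$ be injective (not necessarily well-ordered) valuations on a $\Bbbk$-vector space $S$, and suppose there is a basis $\mathbf B$ of $S$ adapted to both $\nu$ and $\nu'$. Then for every $a\in C_\nu:=\nu(S\setminus\{0\})$ the minimum $\min\{\nu'(x):x\in S\setminus\{0\},\ \nu(x)=a\}$ exists, and the assignment $a\mapsto$ this minimum defines a bijection $\mathbf K_{\nu',\nu}:C_\nu\to C_{\nu'}:=\nu'(S\setminus\{0\})$ such that $\nu'(b)=\mathbf K_{\nu',\nu}(\nu(b))$ for every basis $\mathbf B$ adapted to both valuations and every $b\in\mathbf B$.
   Context: A valuation on a $\Bbbk$-vector space $S$ with values in a totally ordered set $(C,\le)$ is a map $\nu:S\setminus\{0\}\to C$ such that $\nu(cx)=\nu(x)$ for all $c\in\Bbbk^\times$, $x\ne0$, and $\nu(x+y)\le\max(\nu(x),\nu(y))$ whenever $x,y,x+y\neq 0$. It is injective if there is a basis $\mathbf B$ of $S$ such that $\nu|_{\mathbf B}$ is injective; such a basis is called adapted to $\nu$. *)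

(* Defs.v *)
From mathcomp Require Import all_boot all_order all_algebra.
Set Implicit Arguments. Unset Strict Implicit. Unset Printing Implicit Defensive.
Import Order.TTheory GRing.Theory.
Local Open Scope ring_scope.

(* A valuation is given as a total map
   S -> C whose value at 0 is irrelevant (only restrictions to S\{0} matter). *)

Definition is_valuation (k : fieldType) (S : lmodType k) (d : Order.disp_t)
  (C : orderType d) (nu : S -> C) : Prop :=
  (forall (c : k) (x : S), c != 0 -> x != 0 -> nu (c *: x) = nu x) /\
  (forall x y : S, x != 0 -> y != 0 -> x + y != 0 ->
     (nu (x + y) <= Order.max (nu x) (nu y))%O).

Definition lin_indep (k : fieldType) (S : lmodType k) (B : S -> Prop) : Prop :=
  forall (s : seq S) (c : S -> k), uniq s -> (forall b, b \in s -> B b) ->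
    \sum_(b <- s) c b *: b = 0 -> forall b, b \in s -> c b = 0.

Definition spans (k : fieldType) (S : lmodType k) (B : S -> Prop) : Prop :=
  forall x : S, exists (s : seq S) (c : S -> k),
    (forall b, b \in s -> B b) /\ x = \sum_(b <- s) c b *: b.

Definition is_basis (k : fieldType) (S : lmodType k) (B : S -> Prop) : Prop :=
  lin_indep B /\ spans B.

Definition adapted (k : fieldType) (S : lmodType k) (d : Order.disp_t)
  (C : orderType d) (nu : S -> C) (B : S -> Prop) : Prop :=
  is_basis B /\ (forall b1 b2, B b1 -> B b2 -> nu b1 = nu b2 -> b1 = b2).

Definition injective_valuation (k : fieldType) (S : lmodType k)
  (d : Order.disp_t) (C : orderType d) (nu : S -> C) : Prop :=
  is_valuation nu /\ exists B, adapted nu B.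

Definition val_image (k : fieldType) (S : lmodType k) (d : Order.disp_t)
  (C : orderType d) (nu : S -> C) (a : C) : Prop :=
  exists x : S, x != 0 /\ nu x = a.

(* Main.v *)
Require Import Defs.
From mathcomp Require Import all_boot all_order all_algebra.
Import Order.TTheory GRing.Theory.
Local Open Scope ring_scope.

Lemma normal_form (k : fieldType) (S : lmodType k) (s : seq S) (c : S -> k) :
  exists (s' : seq S) (c' : S -> k), uniq s' /\ {subset s' <= s} /\
    (forall b, b \in s' -> c' b != 0) /\
    \sum_(b <- s) c b *: b = \sum_(b <- s') c' b *: b.
Proof.
pose c' := fun b => c b *+ count_mem b s.
exists [seq b <- undup s | c' b != 0], c'.
split; first by rewrite filter_uniq ?undup_uniq.
split; first by move=> b; rewrite mem_filter mem_undup => /andP[].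
split; first by move=> b; rewrite mem_filter => /andP[].
rewrite big_filter /=.
rewrite -(big_undup_iterop_count _ s predT (fun b => c b *: b)).
rewrite [LHS](bigID (fun b => c' b != 0)) /= [X in _ + X]big1 ?addr0.
  by apply: eq_bigr => b _; rewrite /c' -scalerMnl.
by move=> b; rewrite negbK /c' => /eqP H; rewrite -[iterop _ _ _ _]/(GRing.natmul _ _) scalerMnl H scale0r.
Qed.

Lemma val_opp (k : fieldType) (S : lmodType k) d (C : orderType d) (nu : S -> C) x :
  is_valuation nu -> x != 0 -> nu (- x) = nu x.
Proof.
move=> [hs _] hx; rewrite -scaleN1r hs //; by rewrite oppr_eq0 oner_eq0.
Qed.
Arguments val_opp {k S d C nu x}.

Lemma val_add_lt (k : fieldType) (S : lmodType k) d (C : orderType d) (nu : S -> C) x y :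
  is_valuation nu -> x != 0 -> y != 0 -> (nu x < nu y)%O ->
  x + y != 0 /\ nu (x + y) = nu y.
Proof.
move=> hv hx hy hlt.
have hxy : x + y != 0.
  apply/negP=> /eqP h; move: hlt; have -> : y = - x by rewrite -(addKr x y) h addr0.
  by rewrite val_opp // ltxx.
split=> //.
have h1 : (nu (x + y) <= nu y)%O.
  by move: (hv.2 x y hx hy hxy); rewrite (max_idPr (ltW hlt)).
have h2 : (nu y <= Order.max (nu (x + y)) (nu (- x)))%O.
  have e : y = (x + y) + - x by rewrite addrC addKr.
  have := hv.2 (x + y) (- x) hxy; rewrite oppr_eq0 -e => /(_ hx hy) //.
rewrite val_opp // in h2.
apply/eqP; rewrite eq_le h1 /=.
move: h2; rewrite le_max => /orP[] // hh.
by move: (lt_le_trans hlt hh); rewrite ltxx.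
Qed.
Arguments val_add_lt {k S d C nu x y}.

Lemma sum_max (k : fieldType) (S : lmodType k) d (C : orderType d) (nu : S -> C)
   (B : S -> Prop) (s : seq S) (c : S -> k) :
  is_valuation nu ->
  (forall b1 b2, B b1 -> B b2 -> nu b1 = nu b2 -> b1 = b2) ->
  uniq s -> s != [::] -> (forall b, b \in s -> B b /\ b != 0 /\ c b != 0) ->
  \sum_(b <- s) c b *: b != 0 /\ exists b, b \in s /\
     nu (\sum_(b <- s) c b *: b) = nu b /\ forall b', b' \in s -> (nu b' <= nu b)%O.
Proof.
move=> hv hinj; elim: s => [//|a s0 IH] /= /andP[ha hu] _ hs.
have [hBa [ha0 hca]] := hs a (mem_head _ _).
have hva : nu (c a *: a) = nu a by rewrite hv.1.
have hta : c a *: a != 0 by rewrite scaler_eq0 negb_or hca.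
case: s0 IH ha hu hs => [|a1 s1] IH ha hu hs.
  rewrite big_cons big_nil addr0; split=> //; exists a; split; first exact: mem_head.
  by split=> // b'; rewrite inE => /eqP ->.
have [hy [bm [hbm [hvy hmax]]]] := IH hu isT (fun b hb => hs b (@mem_behead _ (a :: a1 :: s1) _ hb)).
rewrite big_cons.
have hne : nu a != nu bm.
  apply/eqP=> e; have hBm := (hs bm (@mem_behead _ (a :: a1 :: s1) _ hbm)).1.
  by move: ha; rewrite (hinj _ _ hBa hBm e) hbm.
case: (ltgtP (nu a) (nu bm)) hne => // hlt _.
- have [h1 h2] := val_add_lt hv hta hy ltac:(by rewrite hva hvy).
  split=> //; exists bm; split; first exact: mem_behead.
  split; first by rewrite h2.
  by move=> b'; rewrite inE => /orP[/eqP ->|]; [exact: ltW | exact: hmax].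
- have [h1 h2] := val_add_lt hv hy hta ltac:(by rewrite hva hvy).
  rewrite addrC; split=> //; exists a; split; first exact: mem_head.
  split; first by rewrite h2.
  move=> b'; rewrite inE => /orP[/eqP ->//|hb'].
  exact: le_trans (hmax _ hb') (ltW hlt).
Qed.
Arguments sum_max {k S d C nu B s c}.
From Stdlib Require Import ClassicalEpsilon.

Lemma basis_nz (k : fieldType) (S : lmodType k) (B : S -> Prop) b :
  is_basis B -> B b -> b != 0.
Proof.
move=> [hi _] hb; apply/negP => /eqP e.
have := hi [:: b] (fun _ => 1) isT ltac:(by move=> b'; rewrite inE => /eqP ->).
move=> /(_ ltac:(by rewrite big_cons big_nil addr0 e scaler0) b (mem_head _ _)) /eqP.
by rewrite oner_eq0.
Qed.
Arguments basis_nz {k S B b}.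

Lemma key (k : fieldType) (S : lmodType k) d (C : orderType d) d' (C' : orderType d')
  (nu : S -> C) (nu' : S -> C') (B : S -> Prop) x :
  is_valuation nu -> is_valuation nu' -> is_basis B ->
  (forall b1 b2, B b1 -> B b2 -> nu b1 = nu b2 -> b1 = b2) ->
  (forall b1 b2, B b1 -> B b2 -> nu' b1 = nu' b2 -> b1 = b2) ->
  x != 0 -> exists b, B b /\ nu b = nu x /\ (nu' b <= nu' x)%O.
Proof.
move=> hv hv' hB hi hi' hx.
have [s [c [hsB ex0]]] := hB.2 x.
have [s' [c' [hu [hsub [hc ex]]]]] := normal_form _ _ s c.
rewrite ex0 ex in hx *.
have hs' : forall b, b \in s' -> B b /\ b != 0 /\ c' b != 0.
  by move=> b hb; have hBb := hsB b (hsub b hb); split=> //; split; [exact: basis_nz hB hBb|exact: hc].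
have hne : s' != [::].
  by apply/negP => /eqP e; move: hx; rewrite e big_nil eqxx.
have [_ [b [hb [e1 _]]]] := sum_max hv hi hu hne hs'.
have [_ [b2 [hb2 [e2 hm]]]] := sum_max hv' hi' hu hne hs'.
exists b; split; first exact: (hs' b hb).1.
by split; [rewrite e1 | rewrite e2; exact: hm].
Qed.
Arguments key {k S d C d' C' nu nu' B x}.

Theorem mainTheorem5 (k : fieldType) (S : lmodType k)
  (d : Order.disp_t) (C : orderType d) (d' : Order.disp_t) (C' : orderType d')
  (nu : S -> C) (nu' : S -> C') :
  injective_valuation nu -> injective_valuation nu' ->
  (exists B : S -> Prop, adapted nu B /\ adapted nu' B) ->
  exists K : C -> C',
    (* for every a in C_nu, K a is the minimum of {nu' x | x <> 0, nu x = a} *)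
    (forall a, val_image nu a ->
       (exists x : S, x != 0 /\ nu x = a /\ nu' x = K a) /\
       (forall x : S, x != 0 -> nu x = a -> (K a <= nu' x)%O)) /\
    (* K restricts to a bijection C_nu -> C_nu' *)
    (forall a, val_image nu a -> val_image nu' (K a)) /\
    (forall a1 a2, val_image nu a1 -> val_image nu a2 -> K a1 = K a2 -> a1 = a2) /\
    (forall a', val_image nu' a' -> exists a, val_image nu a /\ K a = a') /\
    (* compatibility with every basis adapted to both valuations *)
    (forall B : S -> Prop, adapted nu B -> adapted nu' B ->
       forall b, B b -> nu' b = K (nu b)).
Proof.
move=> [hv _] [hv' _] [B0 [[hB0 hi0] [_ hi0']]].
pose P a m := (exists x : S, x != 0 /\ nu x = a /\ nu' x = m) /\
       (forall x : S, x != 0 -> nu x = a -> (m <= nu' x)%O).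
have Puniq : forall a m1 m2, P a m1 -> P a m2 -> m1 = m2.
  move=> a m1 m2 [[x1 [hx1 [e1 f1]]] h1] [[x2 [hx2 [e2 f2]]] h2].
  apply/le_anti/andP; split; [rewrite -f2; exact: h1 | rewrite -f1; exact: h2].
have strong : forall B, adapted nu B -> adapted nu' B -> forall a, val_image nu a ->
    exists b, B b /\ nu b = a /\ P a (nu' b).
  move=> B [hB hi] [_ hi'] a [x [hx ex]].
  have [b [hb [eb _]]] := key hv hv' hB hi hi' hx.
  exists b; split=> //; split; first by rewrite eb.
  split; first by exists b; split=> //; [exact: basis_nz hB hb| rewrite eb].
  move=> y hy ey.
  have [b' [hb' [eb' le']]] := key hv hv' hB hi hi' hy.
  have -> : b = b' by apply: hi => //; rewrite eb eb' ey.
  exact: le'.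
pose K a := epsilon (inhabits (nu' 0)) (P a).
have KP : forall a, val_image nu a -> P a (K a).
  move=> a ha; apply: epsilon_spec.
  have [b [_ [_ hP]]] := strong B0 (conj hB0 hi0) (conj hB0 hi0') a ha.
  by exists (nu' b).
have Keq : forall B, adapted nu B -> adapted nu' B -> forall a, val_image nu a ->
    exists b, B b /\ nu b = a /\ K a = nu' b.
  move=> B h1 h2 a ha; have [b [hb [eb hP]]] := strong B h1 h2 a ha.
  by exists b; split=> //; split=> //; apply: Puniq (KP a ha) hP.
have A0 : adapted nu B0 by [].
have A0' : adapted nu' B0 by [].
exists K; split; first by move=> a ha; exact: KP.
split.
  by move=> a ha; have [[x [hx [_ e]]] _] := KP a ha; exists x.
split.
  move=> a1 a2 h1 h2 e.
  have [b1 [hb1 [eb1 f1]]] := Keq B0 A0 A0' a1 h1.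
  have [b2 [hb2 [eb2 f2]]] := Keq B0 A0 A0' a2 h2.
  by rewrite -eb1 -eb2 (hi0' b1 b2 hb1 hb2) // -f1 -f2.
split.
  move=> a' [x [hx ex]].
  have [b [hb [eb _]]] := key hv' hv hB0 hi0' hi0 hx.
  have hva : val_image nu (nu b) by exists b; split=> //; exact: basis_nz hB0 hb.
  exists (nu b); split=> //.
  have [b2 [hb2 [eb2 f2]]] := Keq B0 A0 A0' _ hva.
  by rewrite f2 (hi0 b2 b hb2 hb eb2) eb.
move=> B h1 h2 b hb.
have hva : val_image nu (nu b) by exists b; split=> //; exact: basis_nz h1.1 hb.
have [b2 [hb2 [eb2 f2]]] := Keq B h1 h2 _ hva.
by rewrite f2 (h1.2 b2 b hb2 hb eb2).
Qed.
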